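(* Let $q\ge 1$ and let $\rho_{\rm ref}$ be the function defined in the context below. Then: (1) $\rho_{\rm ref}(0)=1$ and $\rho_{\rm ref}(1)=1/2$; (2) $\rho_{\rm ref}'(1)<0$; (3) $\rho_{\rm ref}(\mu)\ge 1/2$ for all $\mu\in[-1,1]$.
   Context: Let $(w_k,t_k)$, $k=1,\dots,q$, be the weights and nodes of the $q$-point Gauss–Legendre quadrature rule on $[-1,1]$. Thus $w_k>0$ and $-1<t_k<1$. The rule is symmetric: whenever $(w_k,t_k)$ is a weight–node pair, so is $(w_k,-t_k)$. It satisfies $\sum_{k=1}^q w_k=2$ and is exact for polynomials of degree at most $2q-1$. For real $\mu$ define $$\rho_{\rm ref}(\mu)=\frac12\sum_{k=1}^q w_k\,\frac{1+\mu s_k}{1+2\mu s_k+\mu^2},\qquad s_k=\sin(\pi t_k/2).$$ Equivalently, $\rho_{\rm ref}$ is the result of applying this quadrature rule to the Cauchy integral $\frac{1}{2\pi\iota}\oint_{|z|=1}\frac{dz}{z-\mu}$ (the indicator of the unit disk), with the circle parametrized by $\phi(t)=e^{\iota\frac{\pi}{2}(1+t)}$ for $-1\le t\le 3$ and the integral folded onto $[-1,1]$. *)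

(* Defs.v *)
From Stdlib Require Import Reals Lra Lia.
Open Scope R_scope.

Fixpoint fsum (n : nat) (f : nat -> R) : R :=
  match n with
  | O => 0
  | S m => fsum m f + f m
  end.

Definition peval (d : nat) (a : nat -> R) (x : R) : R :=
  fsum d (fun i => a i * x ^ i).

(* (w_k, t_k), k = 0..q-1, is the q-point Gauss-Legendre rule on [-1,1],
   together with the properties recorded in the paper's context. *)
Definition gauss_legendre (q : nat) (w t : nat -> R) : Prop :=
  (forall k, (k < q)%nat -> 0 < w k /\ -1 < t k < 1) /\
  (forall k j, (k < q)%nat -> (j < q)%nat -> k <> j -> t k <> t j) /\
  (forall k, (k < q)%nat -> exists j, (j < q)%nat /\ w j = w k /\ t j = - t k) /\
  fsum q w = 2 /\
  (* exact for all polynomials of degree at most 2q-1 *)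
  (forall a : nat -> R,
     exists pr : Riemann_integrable (peval (2 * q) a) (-1) 1,
       RiemannInt pr = fsum q (fun k => w k * peval (2 * q) a (t k))).

Definition rho_ref (q : nat) (w t : nat -> R) (mu : R) : R :=
  / 2 * fsum q (fun k =>
    w k * ((1 + mu * sin (PI * t k / 2)) /
           (1 + 2 * mu * sin (PI * t k / 2) + mu ^ 2))).

(* Main.v *)
Require Import Defs.
From Stdlib Require Import Reals Lra Lia.
From Coquelicot Require Import Coquelicot.
Open Scope R_scope.

Lemma fsum_ext n f g : (forall k, (k < n)%nat -> f k = g k) -> fsum n f = fsum n g.
Proof. induction n; simpl; intros H; auto. rewrite IHn; [rewrite H|]; auto; intros; apply H; lia. Qed.

Lemma fsum_le n f g : (forall k, (k < n)%nat -> f k <= g k) -> fsum n f <= fsum n g.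
Proof. induction n; simpl; intros H; [lra|]. assert (f n <= g n) by (apply H; lia).
  assert (fsum n f <= fsum n g) by (apply IHn; intros; apply H; lia). lra. Qed.

Lemma fsum_lt n f g : (1 <= n)%nat -> (forall k, (k < n)%nat -> f k < g k) -> fsum n f < fsum n g.
Proof. intros Hn H. destruct n; [lia|]. simpl.
  assert (f n < g n) by (apply H; lia).
  assert (fsum n f <= fsum n g) by (apply fsum_le; intros; apply Rlt_le, H; lia). lra. Qed.

Lemma fsum_scal n c f : fsum n (fun k => c * f k) = c * fsum n f.
Proof. induction n; simpl; [ring|]. rewrite IHn; ring. Qed.

Lemma fsum_deriv n (F : nat -> R -> R) (L : nat -> R) x :
  (forall k, (k < n)%nat -> derivable_pt_lim (F k) x (L k)) ->
  derivable_pt_lim (fun y => fsum n (fun k => F k y)) x (fsum n L).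
Proof.
  induction n; simpl; intros H.
  - apply derivable_pt_lim_const.
  - apply (derivable_pt_lim_plus (fun y => fsum n (fun k => F k y)) (F n)).
    + apply IHn; intros; apply H; lia.
    + apply H; lia.
Qed.

Lemma sin_bounds x : -1 < x < 1 -> -1 < sin (PI * x / 2) < 1.
Proof.
  intros Hx. pose proof PI_RGT_0.
  assert (-(PI/2) < PI * x / 2 < PI/2) by nra.
  split.
  - replace (-1) with (sin (-(PI/2))) by (rewrite sin_neg, sin_PI2; ring).
    apply sin_increasing_1; lra.
  - replace 1 with (sin (PI/2)) by (apply sin_PI2).
    apply sin_increasing_1; lra.
Qed.

Lemma term_deriv (w s : R) : -1 < s < 1 ->
  derivable_pt_lim (fun mu => w * ((1 + mu * s) / (1 + 2 * mu * s + mu ^ 2))) 1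
    (w * (- / (2 * (1 + s)))).
Proof.
  intros Hs. apply is_derive_Reals.
  auto_derive.
  - lra.
  - field. lra.
Qed.

Theorem theorem1 (q : nat) (w t : nat -> R) :
  (1 <= q)%nat ->
  gauss_legendre q w t ->
  (rho_ref q w t 0 = 1 /\ rho_ref q w t 1 = / 2) /\
  (exists l, derivable_pt_lim (rho_ref q w t) 1 l /\ l < 0) /\
  (forall mu, -1 <= mu <= 1 -> / 2 <= rho_ref q w t mu).
Proof.
  intros Hq [Hwt [_ [_ [Hsum _]]]].
  assert (Hs : forall k, (k < q)%nat -> 0 < w k /\ -1 < sin (PI * t k / 2) < 1).
  { intros k Hk. destruct (Hwt k Hk) as [A B]. split; auto. apply sin_bounds; auto. }
  split; [split|split].
  - unfold rho_ref. rewrite (fsum_ext _ _ w). rewrite Hsum; lra.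
    intros k _. simpl. field.
  - unfold rho_ref. rewrite (fsum_ext _ _ (fun k => /2 * w k)).
    rewrite fsum_scal, Hsum; lra.
    intros k Hk. destruct (Hs k Hk) as [_ B]. field. lra.
  - exists (/2 * fsum q (fun k => w k * (- / (2 * (1 + sin (PI * t k / 2)))))).
    split.
    + unfold rho_ref.
      apply (derivable_pt_lim_scal (fun mu => fsum q (fun k => w k * ((1 + mu * sin (PI * t k / 2)) /
           (1 + 2 * mu * sin (PI * t k / 2) + mu ^ 2))))).
      apply (fsum_deriv q (fun k mu => w k * ((1 + mu * sin (PI * t k / 2)) /
           (1 + 2 * mu * sin (PI * t k / 2) + mu ^ 2)))).
      intros k Hk. apply term_deriv. apply Hs; auto.
    + assert (fsum q (fun k => w k * (- / (2 * (1 + sin (PI * t k / 2))))) < fsum q (fun _ => 0)).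
      { apply fsum_lt; auto. intros k Hk. destruct (Hs k Hk) as [A B].
        assert (0 < / (2 * (1 + sin (PI * t k / 2)))) by (apply Rinv_0_lt_compat; lra).
        nra. }
      assert (fsum q (fun _ => 0) = 0) by (clear; induction q; simpl; lra).
      lra.
  - intros mu Hmu. unfold rho_ref.
    assert (fsum q (fun k => /2 * w k) <= fsum q (fun k =>
      w k * ((1 + mu * sin (PI * t k / 2)) / (1 + 2 * mu * sin (PI * t k / 2) + mu ^ 2)))).
    { apply fsum_le. intros k Hk. destruct (Hs k Hk) as [A B].
      set (s := sin (PI * t k / 2)) in *.
      assert (HD : 0 < 1 + 2 * mu * s + mu ^ 2).
      { assert (0 <= (mu + s)^2) by apply pow2_ge_0. assert (s*s < 1) by nra. nra. }
      assert (/2 <= (1 + mu * s) / (1 + 2 * mu * s + mu ^ 2)).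
      { apply Rmult_le_reg_r with (1 + 2 * mu * s + mu ^ 2); auto.
        replace ((1 + mu * s) / (1 + 2 * mu * s + mu ^ 2) * (1 + 2 * mu * s + mu ^ 2))
          with (1 + mu * s) by (field; lra). nra. }
      nra. }
    rewrite fsum_scal, Hsum in H. lra.
Qed.
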